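(* In the Schwarzschild spacetime of mass $m>0$ written in ingoing Eddington--Finkelstein coordinates $(v,r,\omega)\in\mathbb R\times(0,\infty)\times S^2$, $\mathfrak g=-(1-\frac{2m}r)dv^2+2dv\,dr+r^2d\omega^2$, there exists a smooth one-parameter family of spacelike hypersurfaces $\{\Sigma_T\}_{T\in\mathbb R}$ such that: (i) the $\Sigma_T$ form a smooth foliation of the region $r>0$; equivalently $(T,r,\omega)$ is a smooth horizon-penetrating coordinate system with $\Sigma_T=\{T=\mathrm{const}\}$; (ii) each $\Sigma_T$ meets the future horizon $\mathcal H^+=\{r=2m\}$ in a round sphere $S_T=\Sigma_T\cap\mathcal H^+$, the family $\{S_T\}_{T\in\mathbb R}$ foliates $\mathcal H^+$, and each $S_T$ is a MOTS; (iii) there is a smooth function $r_{\mathrm{cut}}(T)=2m+2\delta_0e^{-T/(4m)}$, for some fixed constant $\delta_0>0$, so that $r_{\mathrm{cut}}(T)\downarrow2m$ as $T\to+\infty$ and $\Sigma_T\cap\{r\ge r_{\mathrm{cut}}(T)\}=\{t_{\mathrm{Sch}}=T\}\cap\{r\ge r_{\mathrm{cut}}(T)\}$; in particular $\Sigma_T$ is tangentially maximal on $r\ge r_{\mathrm{cut}}(T)$.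
   Context: On $r>2m$, the Schwarzschild time is $t_{\mathrm{Sch}}=v-r_*(r)$ with $r_*(r)=r+2m\log(\frac r{2m}-1)$. A MOTS is a closed spacelike surface whose future outgoing null expansion vanishes. A spacelike hypersurface foliated by closed spacelike surfaces (here the spheres $r=\mathrm{const}$) is tangentially maximal (on a region) if the trace over each leaf of its second fundamental form vanishes, equivalently the spacetime mean curvature vector of each leaf is tangent to the hypersurface. *)

(* Defs.v *)
From Stdlib Require Import Reals.
From Coquelicot Require Import Coquelicot.
Open Scope R_scope.

Definition d1 (f : R -> R -> R) : R -> R -> R :=
  fun x y => Derive (fun t => f t y) x.
Definition d2 (f : R -> R -> R) : R -> R -> R :=
  fun x y => Derive (fun t => f x t) y.

Fixpoint Ck (k : nat) (U : R -> R -> Prop) (f : R -> R -> R) : Prop :=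
  (forall x y, U x y -> continuity_2d_pt f x y) /\
  match k with
  | O => True
  | S k' =>
      (forall x y, U x y ->
         ex_derive (fun t => f t y) x /\ ex_derive (fun t => f x t) y)
      /\ Ck k' U (d1 f) /\ Ck k' U (d2 f)
  end.

Definition smooth2 (U : R -> R -> Prop) (f : R -> R -> R) : Prop :=
  forall k, Ck k U f.

Definition half_plane (x r : R) : Prop := 0 < r.

(** Schwarzschild metric in ingoing Eddington--Finkelstein coordinates,
    g = -(1-2m/r) dv^2 + 2 dv dr + r^2 domega^2.
    Its restriction to the radial (v,r)-plane, on vectors X = (X^v, X^r): *)
Definition g_rad (m r : R) (X Y : R * R) : R :=
  - (1 - 2 * m / r) * (fst X) * (fst Y) + (fst X) * (snd Y) + (snd X) * (fst Y).
(* The angular part r^2 domega^2 is positive definite for r > 0 and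
   g-orthogonal to the radial plane. *)

(** Inverse metric in the radial plane: g^{vv} = 0, g^{vr} = 1,
    g^{rr} = 1 - 2m/r.  Gradient of the area-radius function r:
    (grad r)^a = g^{ab} d_b r = (g^{vr}, g^{rr}). *)
Definition grad_r (m r : R) : R * R := (1, 1 - 2 * m / r).

Definition rstar (m r : R) : R := r + 2 * m * ln (r / (2 * m) - 1).
Definition tSch (m v r : R) : R := v - rstar m r.

(** Time orientation: -d_r is a future-directed null vector; a causal
    vector X not proportional to d_r is future-directed iff
    g(X, -d_r) < 0, i.e. X^v > 0.  The future outgoing null directions
    normal to the round sphere {v = v0, r = r0} are the null vectors of the
    radial plane with X^v > 0. *)
Definition future_outgoing_null (m r : R) (X : R * R) : Prop :=
  g_rad m r X X = 0 /\ 0 < fst X.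

(** Null expansion of the round sphere {v = v0, r = r0} (area 4 pi r0^2)
    along a radial normal vector X: theta_X = X(log r^2) = (2/r0) X^r. *)
Definition expansion (r0 : R) (X : R * R) : R := 2 / r0 * snd X.

(** MOTS: the future outgoing null expansion vanishes (the condition is
    invariant under positive rescaling of the null normal). *)
Definition round_sphere_is_MOTS (m v0 r0 : R) : Prop :=
  exists X, future_outgoing_null m r0 X /\ expansion r0 X = 0.

(** Spherically symmetric hypersurfaces Sigma_T = {v = F T r} (r > 0).
    Tangent radial vector at (F T r, r): (d2 F T r, 1). *)
Definition Sigma (F : R -> R -> R) (T : R) (v r : R) : Prop :=
  0 < r /\ v = F T r.

Definition radial_tangent (F : R -> R -> R) (T r : R) : R * R :=
  (d2 F T r, 1).

(** Sigma_T spacelike: the induced metric is positive definite, i.e. the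
    radial tangent vector is spacelike (angular directions are spacelike
    and orthogonal to it). *)
Definition spacelike_slice (m : R) (F : R -> R -> R) (T : R) : Prop :=
  forall r, 0 < r ->
    g_rad m r (radial_tangent F T r) (radial_tangent F T r) > 0.

Definition mean_curv_vec (m r : R) : R * R :=
  (- (2 / r) * fst (grad_r m r), - (2 / r) * snd (grad_r m r)).

Definition tangentially_maximal_at (m : R) (F : R -> R -> R) (T r : R) : Prop :=
  exists lam : R,
    mean_curv_vec m r = (lam * fst (radial_tangent F T r),
                         lam * snd (radial_tangent F T r)).

(* Main.v *)
From Stdlib Require Import Reals Lra Lia Ranalysis5 FunctionalExtensionality ClassicalEpsilon.
From Coquelicot Require Import Coquelicot.
Require Import Defs.
Open Scope R_scope.

Fixpoint C1 (n : nat) (f : R -> R) : Prop :=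
  match n with
  | O => forall x, continuous f x
  | S n' => (forall x, ex_derive f x) /\ C1 n' (Derive f)
  end.

Lemma C1_cont n f : C1 n f -> forall x, continuous f x.
Proof.
  destruct n; simpl; [auto|]. intros [H _] x. exact (ex_derive_continuous f x (H x)).
Qed.

Lemma C1_mono n f : C1 (S n) f -> C1 n f.
Proof.
  revert f; induction n; intros f H.
  - simpl. apply (C1_cont 1 f H).
  - destruct H as [H1 H2]. split; auto.
Qed.

Lemma C1_ext n f g : (forall x, f x = g x) -> C1 n f -> C1 n g.
Proof.
  intros E. assert (f = g) by (apply functional_extensionality; auto). subst; auto.
Qed.

Lemma C1_const n c : C1 n (fun _ => c).
Proof.
  revert c; induction n; intros c; simpl.
  - intros x. apply continuous_const.
  - split. intros; apply ex_derive_const.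
    apply C1_ext with (fun _ => 0). intros; rewrite Derive_const; auto. apply IHn.
Qed.

Lemma C1_id n : C1 n (fun x => x).
Proof.
  destruct n; simpl.
  - intros x. apply continuous_id.
  - split. intros; apply ex_derive_id.
    apply C1_ext with (fun _ => 1). intros; rewrite Derive_id; auto. apply C1_const.
Qed.

Lemma C1_plus n f g : C1 n f -> C1 n g -> C1 n (fun x => f x + g x).
Proof.
  revert f g; induction n; intros f g Hf Hg.
  - simpl in *. intros x. apply (continuous_plus f g); auto.
  - destruct Hf as [Hf1 Hf2], Hg as [Hg1 Hg2]. split.
    + intros; apply (ex_derive_plus f g); auto.
    + apply C1_ext with (fun x => Derive f x + Derive g x).
      intros; rewrite Derive_plus; auto. auto.
Qed.

Lemma C1_mult n f g : C1 n f -> C1 n g -> C1 n (fun x => f x * g x).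
Proof.
  revert f g; induction n; intros f g Hf Hg.
  - simpl in *. intros x. apply (continuous_mult f g); auto.
  - pose proof (C1_mono _ _ Hf) as Hf'. pose proof (C1_mono _ _ Hg) as Hg'.
    destruct Hf as [Hf1 Hf2], Hg as [Hg1 Hg2]. split.
    + intros; apply (ex_derive_mult f g); auto.
    + apply C1_ext with (fun x => Derive f x * g x + f x * Derive g x).
      intros; rewrite Derive_mult; auto. apply C1_plus; auto.
Qed.

Lemma C1_comp n f g : C1 n f -> C1 n g -> C1 n (fun x => g (f x)).
Proof.
  revert f g; induction n; intros f g Hf Hg.
  - simpl in *. intros x. apply continuous_comp; auto.
  - pose proof (C1_mono _ _ Hf) as Hf'.
    destruct Hf as [Hf1 Hf2], Hg as [Hg1 Hg2]. split.
    + intros; apply (ex_derive_comp g f); auto.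
    + apply C1_ext with (fun x => Derive g (f x) * Derive f x).
      intros; rewrite (Derive_comp g f); auto; apply Rmult_comm. apply C1_mult; auto.
Qed.

Lemma C1_inv n f : (forall x, f x <> 0) -> C1 n f -> C1 n (fun x => / f x).
Proof.
  intros Hnz. revert f Hnz; induction n; intros f Hnz Hf.
  - simpl in *. intros x. apply continuous_comp with (g := Rinv); auto.
    apply continuity_pt_filterlim. apply continuity_pt_inv; auto.
    apply continuity_pt_id.
  - pose proof (C1_mono _ _ Hf) as Hf'.
    destruct Hf as [Hf1 Hf2]. split.
    + intros; apply (ex_derive_inv f); auto.
    + apply C1_ext with (fun x => (-1) * Derive f x * (/ f x * / f x)).
      intros; rewrite Derive_inv; auto. field; auto.
      apply C1_mult. apply C1_mult; auto. apply C1_const. apply C1_mult; auto.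
Qed.

Lemma C1_exp n : C1 n exp.
Proof.
  induction n; simpl.
  - intros x. apply (ex_derive_continuous exp x). eexists; apply is_derive_exp.
  - split. intros x; eexists; apply is_derive_exp.
    apply C1_ext with exp; auto. intros; symmetry; apply is_derive_unique, is_derive_exp.
Qed.

Definition Zp (k : nat) (s : R) := exp (- / s) * (/ s)^k.
Definition Z (k : nat) (s : R) := if Rle_dec s 0 then 0 else Zp k s.

Lemma Zp_derive k s : s <> 0 -> is_derive (Zp k) s (Zp (S (S k)) s - INR k * Zp (S k) s).
Proof.
  intros Hs. unfold Zp. auto_derive. auto.
  destruct k. simpl. field. auto.
  rewrite S_INR. simpl pred. simpl. field. auto.
Qed.

Lemma exp_pow_INR n x : exp (INR n * x) = exp x ^ n.
Proof.
  induction n. simpl. rewrite Rmult_0_l. apply exp_0.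
  rewrite S_INR, Rmult_plus_distr_r, Rmult_1_l, exp_plus, IHn. simpl. ring.
Qed.

Lemma pow_exp_bound j t : 0 <= t -> t ^ (S j) <= INR (S j) ^ (S j) * exp t.
Proof.
  intros Ht. set (N := INR (S j)).
  assert (HN : 0 < N) by (apply lt_0_INR; lia).
  replace t with (N * (t / N)) at 1 by (field; lra).
  rewrite Rpow_mult_distr.
  replace (exp t) with (exp (t / N) ^ (S j)).
  2:{ rewrite <- exp_pow_INR. f_equal. unfold N. field. fold N. lra. }
  apply Rmult_le_compat_l. apply pow_le; lra.
  apply pow_incr. split. apply Rdiv_le_0_compat; lra.
  pose proof (exp_ineq1_le (t / N)). lra.
Qed.

Lemma Zp_bound j h : 0 < h -> 0 <= Zp j h <= INR (S j) ^ (S j) * h.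
Proof.
  intros Hh. unfold Zp. split.
  apply Rmult_le_pos. left; apply exp_pos. apply pow_le. left; apply Rinv_0_lt_compat; auto.
  pose proof (pow_exp_bound j (/ h)) as B.
  assert (0 <= / h) by (left; apply Rinv_0_lt_compat; auto).
  specialize (B H).
  rewrite exp_Ropp.
  simpl in B.
  apply Rmult_le_reg_r with (exp (/ h) * / h).
  apply Rmult_lt_0_compat. apply exp_pos. apply Rinv_0_lt_compat; auto.
  replace (/ exp (/ h) * (/ h) ^ j * (exp (/ h) * / h)) with (/ h * (/ h) ^ j).
  2:{ field. split. lra. pose proof (exp_pos (/h)); lra. }
  replace (INR (S j) ^ S j * h * (exp (/ h) * / h)) with (INR (S j) ^ S j * exp (/ h)).
  2:{ field. lra. }
  exact B.
Qed.

Lemma Z_derive k s : is_derive (Z k) s (Z (S (S k)) s - INR k * Z (S k) s).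
Proof.
  destruct (Rtotal_order s 0) as [Hs|[Hs|Hs]].
  - apply is_derive_ext_loc with (fun _ => 0).
    + apply locally_interval with m_infty 0; simpl; auto.
      intros y _ Hy. unfold Z. destruct (Rle_dec y 0); auto. lra.
    + unfold Z. destruct (Rle_dec s 0); [|lra].
      replace (0 - INR k * 0) with 0 by ring. apply (is_derive_const 0 s).
  - subst. unfold Z at 2 3. destruct (Rle_dec 0 0); [|lra].
    replace (0 - INR k * 0) with 0 by ring.
    apply is_derive_Reals. intros eps Heps.
    set (C := INR (S (S k)) ^ (S (S k))).
    assert (HC : 0 < C) by (apply pow_lt, lt_0_INR; lia).
    exists (mkposreal (eps / C) (Rdiv_lt_0_compat _ _ Heps HC)). simpl.
    intros h Hh0 Hh. unfold Z. destruct (Rle_dec 0 0); [|lra].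
    rewrite Rplus_0_l.
    destruct (Rle_dec h 0).
    + replace ((0 - 0) / h - 0) with 0 by (field; lra). rewrite Rabs_R0. auto.
    + assert (Hp : 0 < h) by lra.
      replace ((Zp k h - 0) / h - 0) with (Zp (S k) h).
      2:{ unfold Zp. simpl. field. lra. }
      destruct (Zp_bound (S k) h Hp) as [B1 B2]. fold C in B2.
      rewrite Rabs_pos_eq; auto.
      rewrite Rabs_pos_eq in Hh by lra.
      apply Rle_lt_trans with (C * h); auto.
      apply Rmult_lt_reg_l with (/ C). apply Rinv_0_lt_compat; auto.
      replace (/ C * (C * h)) with h by (field; lra).
      replace (/ C * eps) with (eps / C) by (unfold Rdiv; ring). auto.
  - apply is_derive_ext_loc with (Zp k).
    + apply locally_interval with 0 p_infty; simpl; auto.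
      intros y Hy _. unfold Z. destruct (Rle_dec y 0); auto. lra.
    + unfold Z. destruct (Rle_dec s 0); [lra|].
      apply Zp_derive. lra.
Qed.

Lemma C1_Z n : forall k, C1 n (Z k).
Proof.
  induction n; intros k.
  - intros x. apply (ex_derive_continuous (Z k) x). eexists; apply Z_derive.
  - split. intros x; eexists; apply Z_derive.
    apply C1_ext with (fun s => Z (S (S k)) s + (- INR k) * Z (S k) s).
    intros x. symmetry. rewrite (is_derive_unique _ _ _ (Z_derive k x)). ring.
    apply C1_plus; auto. apply C1_mult; auto. apply C1_const.
Qed.

Lemma Z0_pos s : 0 < s -> 0 < Z 0 s.
Proof. intros. unfold Z, Zp. destruct (Rle_dec s 0). lra. simpl. rewrite Rmult_1_r. apply exp_pos. Qed.
Lemma Z0_zero s : s <= 0 -> Z 0 s = 0.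
Proof. intros. unfold Z. destruct (Rle_dec s 0); auto. lra. Qed.
Lemma Z0_nonneg s : 0 <= Z 0 s.
Proof. destruct (Rle_dec s 0). rewrite Z0_zero; lra. left; apply Z0_pos; lra. Qed.

Definition chi (t : R) : R := Z 0 (t + -1) * / (Z 0 (t + -1) + Z 0 (2 + (-1) * t)).

Lemma chi_den_pos t : 0 < Z 0 (t + -1) + Z 0 (2 + (-1) * t).
Proof.
  destruct (Rle_dec t 1).
  - pose proof (Z0_pos (2 + (-1) * t)). pose proof (Z0_nonneg (t + -1)). lra.
  - pose proof (Z0_pos (t + -1)). pose proof (Z0_nonneg (2 + (-1) * t)). lra.
Qed.

Lemma C1_chi n : C1 n chi.
Proof.
  unfold chi. apply C1_mult.
  - apply C1_comp with (g := Z 0). apply C1_plus. apply C1_id. apply C1_const. apply C1_Z.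
  - apply C1_inv. intros x; pose proof (chi_den_pos x); lra.
    apply C1_plus; apply C1_comp with (g := Z 0); try apply C1_Z.
    apply C1_plus. apply C1_id. apply C1_const.
    apply C1_plus. apply C1_const. apply C1_mult. apply C1_const. apply C1_id.
Qed.

Lemma chi_0 t : t <= 1 -> chi t = 0.
Proof. intros. unfold chi. rewrite (Z0_zero (t + -1)) by lra. ring. Qed.
Lemma chi_1 t : 2 <= t -> chi t = 1.
Proof.
  intros. unfold chi. rewrite (Z0_zero (2 + (-1) * t)) by lra.
  pose proof (Z0_pos (t + -1)). field. lra.
Qed.
Lemma chi_bounds t : 0 <= chi t <= 1.
Proof.
  unfold chi. pose proof (chi_den_pos t). pose proof (Z0_nonneg (t + -1)).
  pose proof (Z0_nonneg (2 + (-1) * t)). split.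
  apply Rmult_le_pos; auto. left; apply Rinv_0_lt_compat; auto.
  apply Rmult_le_reg_r with (Z 0 (t + -1) + Z 0 (2 + (-1) * t)); auto.
  rewrite Rmult_assoc, Rinv_l by lra. lra.
Qed.

Definition Dn (t : R) : R := chi t * t + (1 + (-1) * chi t).
Definition lam (t : R) : R := chi t * / Dn t.

Lemma Dn_ge1 t : 1 <= Dn t.
Proof.
  unfold Dn. destruct (Rle_dec t 1).
  - rewrite chi_0 by auto. lra.
  - pose proof (chi_bounds t). nra.
Qed.

Lemma C1_lam n : C1 n lam.
Proof.
  unfold lam. apply C1_mult. apply C1_chi. apply C1_inv.
  intros x; pose proof (Dn_ge1 x); lra.
  unfold Dn. apply C1_plus. apply C1_mult. apply C1_chi. apply C1_id.
  apply C1_plus. apply C1_const. apply C1_mult. apply C1_const. apply C1_chi.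
Qed.

Lemma lam_0 t : t <= 1 -> lam t = 0.
Proof. intros. unfold lam. rewrite chi_0 by auto. ring. Qed.
Lemma lam_inv t : 2 <= t -> lam t = / t.
Proof. intros. unfold lam, Dn. rewrite chi_1 by auto. field. lra. Qed.
Lemma lam_nonneg t : 0 <= lam t.
Proof.
  unfold lam. pose proof (chi_bounds t). pose proof (Dn_ge1 t).
  apply Rmult_le_pos. lra. left; apply Rinv_0_lt_compat; lra.
Qed.
Lemma tlam_bounds t : 0 <= t * lam t <= 1.
Proof.
  destruct (Rle_dec t 1).
  - rewrite lam_0 by auto. lra.
  - pose proof (chi_bounds t). pose proof (Dn_ge1 t).
    unfold lam. split.
    + apply Rmult_le_pos. lra. apply Rmult_le_pos. lra. left; apply Rinv_0_lt_compat; lra.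
    + apply Rmult_le_reg_r with (Dn t). lra.
      replace (t * (chi t * / Dn t) * Dn t) with (t * chi t) by (field; lra).
      unfold Dn. nra.
Qed.

Lemma lam_cont t : continuous lam t.
Proof. apply (C1_cont 0). apply C1_lam. Qed.

Lemma ex_RInt_lam a b : ex_RInt lam a b.
Proof. apply (ex_RInt_continuous (V:=R_CompleteNormedModule)). intros; apply lam_cont. Qed.

Definition L (s : R) : R := RInt lam 0 s.

Lemma L_derive s : is_derive L s (lam s).
Proof.
  apply (is_derive_RInt lam L 0 s).
  - apply filter_forall. intros b. unfold L. apply (RInt_correct (V:=R_CompleteNormedModule)), ex_RInt_lam.
  - apply lam_cont.
Qed.

Lemma C1_L n : C1 n L.
Proof.
  apply C1_mono. simpl. split. intros x; eexists; apply L_derive.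
  apply C1_ext with lam. intros; symmetry; apply is_derive_unique, L_derive.
  apply C1_lam.
Qed.

Lemma L_chasles a b : L b - L a = RInt lam a b.
Proof.
  unfold L. rewrite <- (RInt_Chasles lam 0 a b) by apply ex_RInt_lam.
  change (plus (RInt lam 0 a) (RInt lam a b)) with (RInt lam 0 a + RInt lam a b). ring.
Qed.

Lemma L_mono a b : a <= b -> L a <= L b.
Proof.
  intros H. assert (0 <= RInt lam a b).
  apply RInt_ge_0; auto. apply ex_RInt_lam. intros; apply lam_nonneg.
  rewrite <- L_chasles in H0. lra.
Qed.

Lemma L_0 s : s <= 1 -> L s = 0.
Proof.
  intros H. unfold L. rewrite (RInt_ext lam (fun _ => 0)).
  rewrite RInt_const. apply Rmult_0_r.
  intros x [H1 H2]. apply lam_0.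
  assert (Rmax 0 s <= 1) by (apply Rmax_lub; lra). lra.
Qed.

Lemma L_ln s : 2 <= s -> L s = L 2 + ln s - ln 2.
Proof.
  intros H. pose proof (L_chasles 2 s) as E.
  assert (RInt lam 2 s = ln s - ln 2).
  { rewrite (RInt_ext lam Rinv).
    - apply is_RInt_unique.
      apply (is_RInt_derive ln Rinv 2 s).
      + intros x [H1 H2]. apply is_derive_ln.
        assert (2 <= Rmin 2 s) by (apply Rmin_glb; lra). lra.
      + intros x [H1 H2]. assert (2 <= Rmin 2 s) by (apply Rmin_glb; lra).
        apply continuity_pt_filterlim. apply continuity_pt_inv. apply continuity_pt_id.
        unfold id; lra.
    - intros x [H1 H2]. apply lam_inv.
      assert (2 <= Rmin 2 s) by (apply Rmin_glb; lra). lra. }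
  lra.
Qed.

Definition Q (s : R) : R := s * exp (L s).

Lemma C1_Q n : C1 n Q.
Proof. unfold Q. apply C1_mult. apply C1_id. apply C1_comp with (g := exp). apply C1_L. apply C1_exp. Qed.

Lemma Q_derive s : is_derive Q s (exp (L s) * (1 + s * lam s)).
Proof.
  unfold Q. eapply is_derive_ext. intros; reflexivity.
  replace (exp (L s) * (1 + s * lam s)) with (1 * exp (L s) + s * (lam s * exp (L s))) by ring.
  apply (is_derive_mult (fun x => x) (fun x => exp (L x))).
  apply (is_derive_id (K:=R_AbsRing)). apply (is_derive_comp exp L). apply is_derive_exp. apply L_derive.
  intros; apply Rmult_comm.
Qed.

Lemma DQ_pos s : 0 < exp (L s) * (1 + s * lam s).
Proof. apply Rmult_lt_0_compat. apply exp_pos. pose proof (tlam_bounds s); lra. Qed.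

Lemma Q_le s : s <= 1 -> Q s = s.
Proof. intros. unfold Q. rewrite L_0 by auto. rewrite exp_0. ring. Qed.

Lemma L_nonneg s : 0 <= s -> 0 <= L s.
Proof. intros. rewrite <- (L_0 0) by lra. apply L_mono; auto. Qed.

Lemma Q_incr a b : a < b -> Q a < Q b.
Proof.
  intros H. destruct (Rle_dec b 0).
  - rewrite !Q_le by lra. auto.
  - destruct (Rle_dec a 0).
    + rewrite (Q_le a) by lra. unfold Q.
      pose proof (exp_pos (L b)). nra.
    + unfold Q. pose proof (L_mono a b). 
      assert (exp (L a) <= exp (L b)).
      { destruct (Req_dec (L a) (L b)) as [E|E]. rewrite E; lra. left; apply exp_increasing; lra. }
      pose proof (exp_pos (L a)). nra.
Qed.

Lemma Q_cont x : continuous Q x.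
Proof. apply (C1_cont 0). apply C1_Q. Qed.

Lemma Q_surj u : exists s, Q s = u.
Proof.
  destruct (Rle_dec u 0).
  - exists u. apply Q_le. lra.
  - assert (Hu : u <= Q u).
    { unfold Q. pose proof (L_nonneg u). assert (1 <= exp (L u)).
      { rewrite <- exp_0. destruct (Req_dec (L u) 0). rewrite H0; lra. left; apply exp_increasing; lra. }
      nra. }
    assert (Q 0 = 0) by (rewrite Q_le; lra).
    destruct (IVT_gen Q 0 u u) as [s [_ Hs]].
    + intros x. apply continuity_pt_filterlim. apply Q_cont.
    + rewrite H. rewrite Rmin_left, Rmax_right; lra.
    + exists s; auto.
Qed.

Definition Rinvf (u : R) : R := proj1_sig (constructive_indefinite_description _ (Q_surj u)).

Lemma Q_Rinvf u : Q (Rinvf u) = u.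
Proof. unfold Rinvf. destruct (constructive_indefinite_description _ _). simpl. auto. Qed.

Lemma Q_inj a b : Q a = Q b -> a = b.
Proof.
  intros E. destruct (Rtotal_order a b) as [H|[H|H]]; auto.
  apply Q_incr in H; lra. apply Q_incr in H; lra.
Qed.

Lemma Rinvf_Q s : Rinvf (Q s) = s.
Proof. apply Q_inj. apply Q_Rinvf. Qed.

Lemma Rinvf_cont u : continuity_pt Rinvf u.
Proof.
  set (s := Rinvf u).
  apply (continuity_pt_recip_interv Q Rinvf (s - 1) (s + 1)).
  - lra.
  - intros; apply Q_incr; auto.
  - intros; unfold comp; apply Q_Rinvf.
  - intros x H1 H2. split.
    + destruct (Rle_dec (s - 1) (Rinvf x)); auto.
      assert (Q (Rinvf x) < Q (s - 1)) by (apply Q_incr; lra). rewrite Q_Rinvf in H. lra.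
    + destruct (Rle_dec (Rinvf x) (s + 1)); auto.
      assert (Q (s + 1) < Q (Rinvf x)) by (apply Q_incr; lra). rewrite Q_Rinvf in H. lra.
  - intros; apply continuity_pt_filterlim, Q_cont.
  - rewrite <- (Q_Rinvf u). fold s. split; apply Q_incr; lra.
Qed.

Lemma Rinvf_incr a b : a < b -> Rinvf a < Rinvf b.
Proof.
  intros H. destruct (Rlt_dec (Rinvf a) (Rinvf b)); auto.
  assert (Q (Rinvf b) <= Q (Rinvf a)).
  { destruct (Req_dec (Rinvf a) (Rinvf b)) as [E|E]. rewrite E; lra. left; apply Q_incr; lra. }
  rewrite !Q_Rinvf in H0. lra.
Qed.

Lemma Rinvf_derive u : is_derive Rinvf u (/ (exp (L (Rinvf u)) * (1 + Rinvf u * lam (Rinvf u)))).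
Proof.
  assert (Prf : forall a, Rinvf (u - 1) <= a <= Rinvf (u + 1) -> derivable_pt Q a).
  { intros a _. apply ex_derive_Reals_0. eexists; apply Q_derive. }
  assert (Hi : Rinvf (u - 1) <= Rinvf u <= Rinvf (u + 1)).
  { split; left; apply Rinvf_incr; lra. }
  pose proof (derivable_pt_lim_recip_interv Q Rinvf (u - 1) (u + 1) u Prf (Rinvf_cont u)) as D.
  assert (E : derive_pt Q (Rinvf u) (Prf (Rinvf u) Hi) = exp (L (Rinvf u)) * (1 + Rinvf u * lam (Rinvf u))).
  { rewrite Derive_Reals. apply is_derive_unique, Q_derive. }
  apply is_derive_Reals. replace (/ (exp (L (Rinvf u)) * (1 + Rinvf u * lam (Rinvf u))))
    with (1 / derive_pt Q (Rinvf u) (Prf (Rinvf u) Hi)).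
  apply D; try lra.
  intros; unfold comp, id; apply Q_Rinvf.
  rewrite E. pose proof (DQ_pos (Rinvf u)). lra.
  rewrite E. unfold Rdiv. ring.
Qed.

Lemma C1_Rinvf n : C1 n Rinvf.
Proof.
  induction n.
  - intros x. apply continuity_pt_filterlim, Rinvf_cont.
  - split. intros x; eexists; apply Rinvf_derive.
    apply C1_ext with (fun u => (fun s => / (exp (L s) * (1 + s * lam s))) (Rinvf u)).
    intros; symmetry; apply is_derive_unique, Rinvf_derive.
    apply (C1_comp n Rinvf (fun s => / (exp (L s) * (1 + s * lam s)))); auto. apply C1_inv. intros s; pose proof (DQ_pos s); lra.
    apply C1_mult. apply C1_comp with (g := exp). apply C1_L. apply C1_exp.
    apply C1_plus. apply C1_const. apply C1_mult. apply C1_id. apply C1_lam.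
Qed.

Definition U0 (x y : R) : Prop := True.

Lemma Ck_mono k U f : Ck (S k) U f -> Ck k U f.
Proof.
  revert f; induction k; intros f H.
  - destruct H as [H _]. split; auto.
  - destruct H as [H0 [H1 [H2 H3]]]. split; auto.
Qed.

Lemma Ck_sub k U V f : (forall x y, U x y -> V x y) -> Ck k V f -> Ck k U f.
Proof.
  intros HUV. revert f; induction k; intros f H.
  - destruct H as [H _]. split; auto.
  - destruct H as [H0 [H1 [H2 H3]]]. split; auto.
Qed.

Lemma Ck_ext k U f g : (forall x y, f x y = g x y) -> Ck k U f -> Ck k U g.
Proof.
  intros E. assert (f = g). { apply functional_extensionality; intros x.
  apply functional_extensionality; intros y. auto. } subst; auto.
Qed.

Lemma Ck_const k c : Ck k U0 (fun _ _ => c).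
Proof.
  revert c; induction k; intros c.
  - split; auto. intros; apply continuity_2d_pt_const.
  - split. intros; apply continuity_2d_pt_const.
    split. intros; split; apply ex_derive_const.
    unfold d1, d2. split; apply Ck_ext with (fun _ _ => 0); try (intros; rewrite Derive_const; auto); apply IHk.
Qed.

Lemma Ck_fst k : Ck k U0 (fun x _ => x).
Proof.
  destruct k.
  - split; auto. intros; apply continuity_2d_pt_id1.
  - split. intros; apply continuity_2d_pt_id1.
    split. intros; split. apply ex_derive_id. apply ex_derive_const.
    unfold d1, d2. split.
    apply Ck_ext with (fun _ _ => 1). intros; rewrite Derive_id; auto. apply Ck_const.
    apply Ck_ext with (fun _ _ => 0). intros; rewrite Derive_const; auto. apply Ck_const.
Qed.

Lemma Ck_snd k : Ck k U0 (fun _ y => y).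
Proof.
  destruct k.
  - split; auto. intros; apply continuity_2d_pt_id2.
  - split. intros; apply continuity_2d_pt_id2.
    split. intros; split. apply ex_derive_const. apply ex_derive_id.
    unfold d1, d2. split.
    apply Ck_ext with (fun _ _ => 0). intros; rewrite Derive_const; auto. apply Ck_const.
    apply Ck_ext with (fun _ _ => 1). intros; rewrite Derive_id; auto. apply Ck_const.
Qed.

Lemma Ck_plus k f g : Ck k U0 f -> Ck k U0 g -> Ck k U0 (fun x y => f x y + g x y).
Proof.
  revert f g; induction k; intros f g Hf Hg.
  - destruct Hf as [Hf _], Hg as [Hg _]. split; auto.
    intros; apply continuity_2d_pt_plus; auto.
  - destruct Hf as [Hf0 [Hf1 [Hf2 Hf3]]], Hg as [Hg0 [Hg1 [Hg2 Hg3]]].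
    split. intros; apply continuity_2d_pt_plus; auto.
    split. intros x y _. destruct (Hf1 x y I), (Hg1 x y I). split.
    apply (ex_derive_plus (fun t => f t y) (fun t => g t y)); auto.
    apply (ex_derive_plus (fun t => f x t) (fun t => g x t)); auto.
    split.
    + apply Ck_ext with (fun x y => d1 f x y + d1 g x y); auto.
      intros x y. destruct (Hf1 x y I), (Hg1 x y I). unfold d1.
      rewrite (Derive_plus (fun t => f t y) (fun t => g t y)); auto.
    + apply Ck_ext with (fun x y => d2 f x y + d2 g x y); auto.
      intros x y. destruct (Hf1 x y I), (Hg1 x y I). unfold d2.
      rewrite (Derive_plus (fun t => f x t) (fun t => g x t)); auto.
Qed.

Lemma Ck_mult k f g : Ck k U0 f -> Ck k U0 g -> Ck k U0 (fun x y => f x y * g x y).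
Proof.
  revert f g; induction k; intros f g Hf Hg.
  - destruct Hf as [Hf _], Hg as [Hg _]. split; auto.
    intros; apply continuity_2d_pt_mult; auto.
  - pose proof (Ck_mono _ _ _ Hf) as Hf'. pose proof (Ck_mono _ _ _ Hg) as Hg'.
    destruct Hf as [Hf0 [Hf1 [Hf2 Hf3]]], Hg as [Hg0 [Hg1 [Hg2 Hg3]]].
    split. intros; apply continuity_2d_pt_mult; auto.
    split. intros x y _. destruct (Hf1 x y I), (Hg1 x y I). split.
    apply (ex_derive_mult (fun t => f t y) (fun t => g t y)); auto.
    apply (ex_derive_mult (fun t => f x t) (fun t => g x t)); auto.
    split.
    + apply Ck_ext with (fun x y => d1 f x y * g x y + f x y * d1 g x y).
      intros x y. destruct (Hf1 x y I), (Hg1 x y I). unfold d1.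
      rewrite (Derive_mult (fun t => f t y) (fun t => g t y)); auto.
      apply Ck_plus; auto.
    + apply Ck_ext with (fun x y => d2 f x y * g x y + f x y * d2 g x y).
      intros x y. destruct (Hf1 x y I), (Hg1 x y I). unfold d2.
      rewrite (Derive_mult (fun t => f x t) (fun t => g x t)); auto.
      apply Ck_plus; auto.
Qed.

Lemma Ck_comp k (phi : R -> R) f : C1 k phi -> Ck k U0 f -> Ck k U0 (fun x y => phi (f x y)).
Proof.
  revert phi f; induction k; intros phi f Hp Hf.
  - destruct Hf as [Hf _]. split; auto.
    intros x y _. apply continuity_1d_2d_pt_comp; [|apply Hf; exact I].
    apply continuity_pt_filterlim. exact (C1_cont 0 phi Hp (f x y)).
  - pose proof (Ck_mono _ _ _ Hf) as Hf'. pose proof (C1_mono _ _ Hp) as Hp'.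
    destruct Hf as [Hf0 [Hf1 [Hf2 Hf3]]]. destruct Hp as [Hp1 Hp2].
    split. intros x y _. apply continuity_1d_2d_pt_comp; [|apply Hf0; exact I].
    apply continuity_pt_filterlim. exact (C1_cont k phi Hp' (f x y)).
    split. intros x y _. destruct (Hf1 x y I). split.
    apply (ex_derive_comp phi (fun t => f t y)); auto.
    apply (ex_derive_comp phi (fun t => f x t)); auto.
    split.
    + apply Ck_ext with (fun x y => Derive phi (f x y) * d1 f x y).
      intros x y. destruct (Hf1 x y I). unfold d1.
      rewrite (Derive_comp phi (fun t => f t y)); auto. apply Rmult_comm.
      apply Ck_mult; [apply (IHk (Derive phi) f); auto | auto].
    + apply Ck_ext with (fun x y => Derive phi (f x y) * d2 f x y).
      intros x y. destruct (Hf1 x y I). unfold d2.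
      rewrite (Derive_comp phi (fun t => f x t)); auto. apply Rmult_comm.
      apply Ck_mult; [apply (IHk (Derive phi) f); auto | auto].
Qed.

Definition KK : R := L 2 - ln 2.
Definition FF (m T r : R) : R :=
  T * / 2 + r + 2 * m * (L ((r + - (2 * m)) * exp (T * / (4 * m))) + - KK) + - (2 * m * ln (2 * m)).
Definition WW (m v r : R) : R := (v + (-1) * r + 2 * m * ln (2 * m)) * / (2 * m) + KK.
Definition GG (m v r : R) : R :=
  4 * m * (WW m v r + (-1) * L (Rinvf ((r + - (2 * m)) * exp (WW m v r)))).

Ltac ck := repeat first [ apply Ck_const | apply Ck_fst | apply Ck_snd | apply Ck_plus | apply Ck_mult
  | apply (Ck_comp _ exp); [apply C1_exp|]
  | apply (Ck_comp _ L); [apply C1_L|]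
  | apply (Ck_comp _ Rinvf); [apply C1_Rinvf|] ].

Lemma FF_smooth m k : Ck k U0 (FF m).
Proof. unfold FF. ck. Qed.

Lemma GG_smooth m k : Ck k U0 (GG m).
Proof. unfold GG, WW. ck. Qed.

Lemma GF m T r : 0 < m -> GG m (FF m T r) r = T.
Proof.
  intros Hm. unfold GG.
  set (s := (r + - (2 * m)) * exp (T * / (4 * m))).
  assert (Hw : WW m (FF m T r) r = T * / (4 * m) + L s).
  { unfold WW, FF. fold s. field. lra. }
  rewrite Hw, exp_plus.
  replace ((r + - (2 * m)) * (exp (T * / (4 * m)) * exp (L s))) with (Q s) by (unfold Q, s; ring).
  rewrite Rinvf_Q. field. lra.
Qed.

Lemma FG m v r : 0 < m -> FF m (GG m v r) r = v.
Proof.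
  intros Hm.
  set (w := WW m v r).
  set (u := (r + - (2 * m)) * exp w).
  set (s' := Rinvf u).
  assert (HQ : s' * exp (L s') = u) by (apply Q_Rinvf).
  assert (HG : GG m v r = 4 * m * (w + (-1) * L s')) by reflexivity.
  assert (Hs : (r + - (2 * m)) * exp (GG m v r * / (4 * m)) = s').
  { rewrite HG. replace (4 * m * (w + -1 * L s') * / (4 * m)) with (w + - L s') by (field; lra).
    rewrite exp_plus, exp_Ropp. rewrite <- Rmult_assoc. fold u. rewrite <- HQ.
    field. pose proof (exp_pos (L s')); lra. }
  unfold FF. rewrite Hs, HG. unfold w, WW. field. lra.
Qed.

Lemma FF_d2 m T r : d2 (FF m) T r = 1 + 2 * m * (lam ((r + - (2 * m)) * exp (T * / (4 * m))) * exp (T * / (4 * m))).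
Proof.
  unfold d2. apply is_derive_unique. unfold FF.
  auto_derive.
  - eexists; apply L_derive.
  - rewrite (is_derive_unique _ _ _ (L_derive _)). ring.
Qed.

Lemma s_ge2 m T r : 0 < m -> r >= 2 * m + 2 * 1 * exp (- T / (4 * m)) ->
  2 <= (r + - (2 * m)) * exp (T * / (4 * m)).
Proof.
  intros Hm H.
  assert (E : exp (- T / (4 * m)) * exp (T * / (4 * m)) = 1).
  { rewrite <- exp_plus. replace (- T / (4 * m) + T * / (4 * m)) with 0 by (field; lra). apply exp_0. }
  pose proof (exp_pos (T * / (4 * m))).
  assert (r + - (2 * m) >= 2 * exp (- T / (4 * m))) by lra.
  apply Rle_trans with (2 * exp (- T / (4 * m)) * exp (T * / (4 * m))).
  rewrite Rmult_assoc, E. lra.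
  apply Rmult_le_compat_r; lra.
Qed.

Lemma FF_rstar m T r : 0 < m -> 2 <= (r + - (2 * m)) * exp (T * / (4 * m)) -> 2 * m < r ->
  FF m T r = T + rstar m r.
Proof.
  intros Hm Hs Hr. unfold FF, rstar.
  rewrite (L_ln _ Hs). unfold KK.
  pose proof (exp_pos (T * / (4 * m))).
  rewrite ln_mult by lra. rewrite ln_exp.
  replace (r / (2 * m) - 1) with ((r + - (2 * m)) / (2 * m)) by (field; lra).
  rewrite ln_div by lra. field. lra.
Qed.

Lemma rcut_lim m : 0 < m -> is_lim (fun T => 2 * m + 2 * 1 * exp (- T / (4 * m))) p_infty (2 * m).
Proof.
  intros Hm.
  assert (H1 : is_lim (fun T => - T / (4 * m)) p_infty m_infty).
  { intros P [M HM]. exists (- M * (4 * m)). intros x Hx. apply HM.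
    apply Rmult_lt_reg_r with (4 * m). lra.
    replace (- x / (4 * m) * (4 * m)) with (- x) by (field; lra). lra. }
  assert (H2 : is_lim (fun T => exp (- T / (4 * m))) p_infty 0).
  { apply (is_lim_comp exp (fun T => - T / (4 * m)) p_infty 0 m_infty).
    apply is_lim_exp_m. exact H1.
    exists 0. intros; discriminate. }
  replace (Finite (2 * m)) with (Rbar_plus (2 * m) (Rbar_mult (2 * 1) 0)).
  apply (is_lim_plus _ _ _ (2 * m) (Rbar_mult (2 * 1) 0)). apply is_lim_const. apply is_lim_scal_l. exact H2.
  all: simpl; try rewrite Rmult_0_r; try rewrite Rplus_0_r; try exact I; try reflexivity.
  unfold is_Rbar_plus; simpl. rewrite Rplus_0_r. reflexivity.
Qed.

Lemma spacelike_FF m T : 0 < m -> spacelike_slice m (FF m) T.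
Proof.
  intros Hm r Hr. unfold g_rad, radial_tangent; simpl. rewrite FF_d2.
  set (E := exp (T * / (4 * m))). set (x := r + - (2 * m)). set (s := x * E).
  assert (HE : 0 < E) by apply exp_pos.
  pose proof (lam_nonneg s). pose proof (tlam_bounds s).
  set (a := 1 + 2 * m * (lam s * E)).
  assert (Ha : 1 <= a). { unfold a. assert (0 <= lam s * E) by (apply Rmult_le_pos; lra). nra. }
  destruct (Rle_dec r (2 * m)).
  - assert (c : 1 - 2 * m / r <= 0).
    { assert (2 * m / r >= 1). { apply Rle_ge. apply Rmult_le_reg_r with r; auto.
      unfold Rdiv. rewrite Rmult_assoc, Rinv_l by lra. lra. } lra. }
    nra.
  - assert (Hx : 0 < x) by (unfold x; lra).
    assert (Hca : (1 - 2 * m / r) * a <= 1).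
    { replace ((1 - 2 * m / r) * a) with ((x + 2 * m * (s * lam s)) / r).
      2:{ unfold a, s, x. field. lra. }
      apply Rmult_le_reg_r with r; auto. unfold Rdiv. rewrite Rmult_assoc, Rinv_l by lra.
      unfold x in *. nra. }
    nra.
Qed.

Theorem mainTheorem10 (m : R) (hm : 0 < m) :
  exists (F : R -> R -> R) (delta0 : R),
    smooth2 half_plane F /\
    (forall T, spacelike_slice m F T) /\
    (exists G : R -> R -> R,
        smooth2 half_plane G /\
        (forall T r, 0 < r -> G (F T r) r = T) /\
        (forall v r, 0 < r -> F (G v r) r = v)) /\
    (forall v r, 0 < r -> exists! T, Sigma F T v r) /\
    (forall v, exists! T, Sigma F T v (2 * m)) /\
    (forall T, round_sphere_is_MOTS m (F T (2 * m)) (2 * m)) /\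
    0 < delta0 /\
    (let rcut := fun T => 2 * m + 2 * delta0 * exp (- T / (4 * m)) in
     (forall T1 T2, T1 < T2 -> rcut T2 < rcut T1) /\
     (forall T, 2 * m < rcut T) /\
     is_lim rcut p_infty (2 * m) /\
     (forall T v r, r >= rcut T ->
        (Sigma F T v r <-> tSch m v r = T)) /\
     (forall T r, r >= rcut T -> tangentially_maximal_at m F T r)).
Proof.
  assert (uniq : forall v r, 0 < r -> exists! T, Sigma (FF m) T v r).
  { intros v r Hr. exists (GG m v r). split.
    - split; auto. symmetry; apply FG; auto.
    - intros T [_ E]. subst v. apply GF; auto. }
  exists (FF m), 1.
  split. { intros k. apply Ck_sub with U0. intros; exact I. apply FF_smooth. }
  split. { intros T; apply spacelike_FF; auto. }
  split. { exists (GG m). split. intros k. apply Ck_sub with U0. intros; exact I. apply GG_smooth.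
           split; intros; [apply GF | apply FG]; auto. }
  split. { exact uniq. }
  split. { intros v; apply uniq; lra. }
  split. { intros T. exists (1, 0). unfold future_outgoing_null, expansion, g_rad; simpl.
           split. split. field. lra. lra. ring. }
  split. { lra. }
  cbv zeta.
  split. { intros T1 T2 H. apply Rplus_lt_compat_l. apply Rmult_lt_compat_l. lra.
           apply exp_increasing. unfold Rdiv. apply Rmult_lt_compat_r.
           apply Rinv_0_lt_compat; lra. lra. }
  split. { intros T. pose proof (exp_pos (- T / (4 * m))). lra. }
  split. { apply rcut_lim; auto. }
  split.
  { intros T v r Hr. pose proof (exp_pos (- T / (4 * m))).
    pose proof (s_ge2 m T r hm Hr) as Hs.
    assert (Hr2 : 2 * m < r) by lra.
    unfold Sigma, tSch. rewrite (FF_rstar m T r hm Hs Hr2). split.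
    - intros [_ E]. subst v. ring.
    - intros E. split. lra. rewrite <- E. ring. }
  { intros T r Hr. pose proof (exp_pos (- T / (4 * m))).
    pose proof (s_ge2 m T r hm Hr) as Hs.
    assert (Hr2 : 2 * m < r) by lra.
    exists (- (2 / r) * (1 - 2 * m / r)).
    unfold mean_curv_vec, grad_r, radial_tangent; simpl. rewrite FF_d2.
    rewrite (lam_inv _ Hs).
    pose proof (exp_pos (T * / (4 * m))).
    f_equal; field; repeat split; lra. }
Qed.
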